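(* For every $n\ge 3$, if $T$ is chosen uniformly at random from $\bigsqcup_{b\ge1,k\ge0,\,2b+k=n}\mathrm{SYT}^{+k}((b,b))$, the expected number of columns of $T$ (i.e. the expected value of $b$) is $\dfrac{n^2+n-6}{4n-6}$.
   Context: $\mathrm{SYT}^{+k}(\lambda)$: for a partition $\lambda$ of $N$ and $k\ge0$, the set of fillings of the cells of $\lambda$ by nonempty sets of positive integers forming a set partition of $[N+k]$, with $\max S(u)<\min S(v)$ whenever $u\ne v$ and $u$ is weakly northwest of $v$. The shape $(b,b)$ is the $2\times b$ rectangle. *)

(* Defs.v *)
From mathcomp Require Import all_boot all_order all_algebra.
Set Implicit Arguments. Unset Strict Implicit. Unset Printing Implicit Defensive.

(* Cells of the 2 x b rectangle (b,b): (row, column), 0-indexed.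
   The ground set [N+k] = {1,...,n} is represented by 'I_n = {0,...,n-1}
   (order-preserving shift by one). *)
Definition cell (b : nat) := ('I_2 * 'I_b)%type.

Definition weakNW (b : nat) (u v : cell b) : bool :=
  (u.1 <= v.1)%N && (u.2 <= v.2)%N.

(* S is an element of SYT^{+k}((b,b)) where n = 2b + k:
   nonempty sets forming a set partition of [n], increasing along weak NW order. *)
Definition is_SYTplus (b n : nat) (S : {ffun cell b -> {set 'I_n}}) : bool :=
  [&& [forall u, S u != set0],
      [forall u, forall v, (u != v) ==> (S u :&: S v == set0)],
      (\bigcup_(u : cell b) S u == [set: 'I_n]) &
      [forall u, forall v, ((u != v) && weakNW u v) ==>
          [forall x in S u, forall y in S v, (x < y)%N]]].

Definition nSYTplus (b n : nat) : nat := #|[set S | @is_SYTplus b n S]|.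

(* Main.v *)
Require Import Defs.
From mathcomp Require Import all_boot all_order all_algebra.
From mathcomp Require Import zify ring lra.
Import GRing.Theory Num.Theory.
Set Implicit Arguments. Unset Strict Implicit. Unset Printing Implicit Defensive.

Definition okS (m n : nat) (D : {set cell m}) (S : {ffun cell m -> {set 'I_n}}) : bool :=
  [&& [forall u, (S u != set0) == (u \in D)],
      [forall u, forall v, (u != v) ==> (S u :&: S v == set0)],
      (\bigcup_(u : cell m) S u == [set: 'I_n]) &
      [forall u, forall v, ((u != v) && weakNW u v) ==>
          [forall x in S u, forall y in S v, (x < y)%N]]].

Definition G (m n : nat) (D : {set cell m}) := #|[set S | @okS m n D S]|.

Definition maximal (m : nat) (D : {set cell m}) (u0 : cell m) : bool :=
  (u0 \in D) && [forall v in D, (v != u0) ==> ~~ weakNW u0 v].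

Definition wd (n : nat) : 'I_n -> 'I_n.+1 := widen_ord (leqnSn n).

Definition ext (m n : nat) (u0 : cell m) (T : {ffun cell m -> {set 'I_n}}) :
  {ffun cell m -> {set 'I_n.+1}} :=
  [ffun u => (@wd n @: T u) :|: (if u == u0 then [set ord_max] else set0)].

Definition res (m n : nat) (S : {ffun cell m -> {set 'I_n.+1}}) :
  {ffun cell m -> {set 'I_n}} := [ffun u => [set x | @wd n x \in S u]].

Lemma wd_inj n : injective (@wd n).
Proof. by move=> x y /(congr1 val) /= /val_inj. Qed.

Lemma wd_neq_max n (x : 'I_n) : (wd x == ord_max) = false.
Proof. by apply/negbTE; rewrite -val_eqE /= neq_ltn ltn_ord. Qed.

Lemma ordS_case n (y : 'I_n.+1) : y = ord_max \/ exists x : 'I_n, y = wd x.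
Proof.
case: (unliftP ord_max y) => [x ->|->]; last by left.
right; exists x; apply/val_inj => /=; by rewrite /bump leqNgt ltn_ord.
Qed.

Lemma mem_ext_max m n u0 (T : {ffun cell m -> {set 'I_n}}) u :
  (ord_max \in ext u0 T u) = (u == u0).
Proof.
rewrite ffunE in_setU; case: (u == u0); rewrite ?inE ?eqxx ?orbT //= orbF.
apply/negbTE/imsetP => -[x _ /eqP]; by rewrite eq_sym wd_neq_max.
Qed.

Lemma mem_ext_wd m n u0 (T : {ffun cell m -> {set 'I_n}}) u x :
  (wd x \in ext u0 T u) = (x \in T u).
Proof.
rewrite ffunE in_setU mem_imset; last exact: wd_inj.
by case: (u == u0); rewrite ?inE ?wd_neq_max orbF.
Qed.

Lemma mem_res m n (S : {ffun cell m -> {set 'I_n.+1}}) u x :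
  (x \in res S u) = (wd x \in S u).
Proof. by rewrite ffunE inE. Qed.

Lemma res_ext m n u0 (T : {ffun cell m -> {set 'I_n}}) : res (ext u0 T) = T.
Proof. apply/ffunP => u; apply/setP => x; by rewrite mem_res mem_ext_wd. Qed.

Lemma ext_res m n u0 (S : {ffun cell m -> {set 'I_n.+1}}) :
  (forall u, (ord_max \in S u) = (u == u0)) -> ext u0 (res S) = S.
Proof.
move=> H; apply/ffunP => u; apply/setP => y.
case: (ordS_case y) => [->|[x ->]]; first by rewrite mem_ext_max H.
by rewrite mem_ext_wd mem_res.
Qed.

Lemma okSP m n (D : {set cell m}) (S : {ffun cell m -> {set 'I_n}}) :
  reflect [/\ forall u, (S u != set0) = (u \in D),
              forall u v x, u != v -> x \in S u -> x \in S v -> False,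
              (forall x, exists u, x \in S u) &
              forall u v x y, u != v -> weakNW u v -> x \in S u -> y \in S v -> (x < y)%N]
          (okS D S).
Proof.
rewrite /okS; apply: (iffP and4P) => -[H1 H2 H3 H4]; split.
- by move=> u; move/forallP: H1 => /(_ u) /eqP.
- move=> u v x Huv Hu Hv; move/forallP: H2 => /(_ u) /forallP /(_ v).
  by rewrite Huv /= => /eqP /setP /(_ x); rewrite inE Hu Hv inE.
- move=> x; move/eqP/setP: H3 => /(_ x); rewrite inE => /bigcupP [u _ Hu].
  by exists u.
- move=> u v x y Huv Hw Hx Hy; move/forallP: H4 => /(_ u) /forallP /(_ v).
  rewrite Huv Hw /= => /forall_inP /(_ x Hx) /forall_inP; exact.
- by apply/forallP => u; rewrite H1.
- apply/forallP => u; apply/forallP => v; apply/implyP => Huv.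
  apply/eqP/setP => x; rewrite !inE; apply/negbTE/andP => -[Hu Hv].
  exact: (H2 u v x).
- apply/eqP/setP => x; rewrite !inE; case: (H3 x) => u Hu.
  by apply/bigcupP; exists u.
- apply/forallP => u; apply/forallP => v; apply/implyP => /andP [Huv Hw].
  apply/forall_inP => x Hx; apply/forall_inP => y Hy; exact: (H4 u v).
Qed.

Lemma maximalP m (D : {set cell m}) u0 :
  reflect (u0 \in D /\ forall v, v \in D -> v != u0 -> ~~ weakNW u0 v) (maximal D u0).
Proof.
apply: (iffP andP) => -[H1 H2]; split => //.
- by move=> v Hv Hn; move/forall_inP: H2 => /(_ v Hv); rewrite Hn.
- by apply/forall_inP => v Hv; apply/implyP; exact: H2.
Qed.

Lemma ext_ok m n (D D' : {set cell m}) u0 (T : {ffun cell m -> {set 'I_n}}) :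
  okS D' T -> maximal D u0 -> (forall u, u != u0 -> (u \in D') = (u \in D)) ->
  okS D (ext u0 T).
Proof.
move=> /okSP [H1 H2 H3 H4] /maximalP [Hu0 Hmax] HD; apply/okSP; split.
- move=> u; case: (eqVneq u u0) => [->|Hne].
  + rewrite Hu0; apply/set0Pn; exists ord_max; by rewrite mem_ext_max eqxx.
  + rewrite -HD // -H1 ffunE (negbTE Hne) setU0.
    by rewrite imset_eq0.
- move=> u v y Huv.
  case: (ordS_case y) => [->|[x ->]]; rewrite ?mem_ext_max ?mem_ext_wd.
  + by move=> /eqP Eu /eqP Ev; move: Huv; rewrite Eu Ev eqxx.
  + exact: H2.
- move=> y; case: (ordS_case y) => [->|[x ->]].
  + by exists u0; rewrite mem_ext_max.
  + by case: (H3 x) => u Hu; exists u; rewrite mem_ext_wd.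
- move=> u v x y Huv Hw.
  case: (ordS_case x) => [->|[x' ->]]; case: (ordS_case y) => [->|[y' ->]];
    rewrite ?mem_ext_max ?mem_ext_wd.
  + by move=> /eqP Eu /eqP Ev; move: Huv; rewrite Eu Ev eqxx.
  + move=> /eqP Eu Hy; exfalso; subst u.
    have Hv : v \in D' by rewrite -H1; apply/set0Pn; exists y'.
    rewrite eq_sym in Huv.
    by move: (Hmax v); rewrite -HD // Hv Huv Hw => /(_ isT isT).
  + by move=> _ _ /=; rewrite ltn_ord.
  + move=> Hx Hy /=; exact: (H4 u v x' y').
Qed.

Lemma res_ok m n (D : {set cell m}) u0 (S : {ffun cell m -> {set 'I_n.+1}}) :
  okS D S -> ord_max \in S u0 ->
  [/\ maximal D u0, (forall u, (ord_max \in S u) = (u == u0)) &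
      okS (if S u0 == [set ord_max] then D :\ u0 else D) (res S)].
Proof.
move=> /okSP [H1 H2 H3 H4] Hm.
have Hu0 : u0 \in D by rewrite -H1; apply/set0Pn; exists ord_max.
have Hone : forall u, (ord_max \in S u) = (u == u0).
  move=> u; case: (eqVneq u u0) => [->//|Hne]; apply/negbTE/negP => Hu.
  exact: (H2 u u0 ord_max Hne).
split => //.
- apply/maximalP; split => // v Hv Hne; apply/negP => Hw.
  move: Hv; rewrite -H1 => /set0Pn [y Hy].
  have := H4 u0 v ord_max y; rewrite eq_sym Hne Hw => /(_ isT isT Hm Hy).
  by rewrite ltnNge -ltnS ltn_ord.
- apply/okSP; split.
  + move=> u; case: (eqVneq u u0) => [->|Hne].
    * case: ifP => [/eqP E|E].
      - rewrite setD11; apply/negbTE; rewrite negbK; apply/eqP/setP => x.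
        by rewrite mem_res E !inE wd_neq_max.
      - rewrite Hu0; apply/set0Pn.
        have [y Hy Hyn] : exists2 y, y \in S u0 & y != ord_max.
          apply/exists_inP; apply: contraFT E => /exists_inPn Hall.
          apply/eqP/setP => y; rewrite inE; apply/idP/idP => [Hy|/eqP ->//].
          by move: (Hall y Hy); rewrite negbK.
        case: (ordS_case y) Hy Hyn => [->|[x ->]]; first by rewrite eqxx.
        by move=> Hx _; exists x; rewrite mem_res.
    * have -> : (u \in (if S u0 == [set ord_max] then D :\ u0 else D)) = (u \in D).
        by case: ifP => _ //; rewrite !inE Hne.
      rewrite -H1; apply/idP/idP => /set0Pn [y Hy]; apply/set0Pn.
      - by exists (wd y); rewrite -mem_res.
      - case: (ordS_case y) Hy => [->|[x ->]]; first by rewrite Hone (negbTE Hne).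
        by move=> Hx; exists x; rewrite mem_res.
  + move=> u v x Huv; rewrite !mem_res; exact: H2.
  + move=> x; case: (H3 (wd x)) => u Hu; by exists u; rewrite mem_res.
  + move=> u v x y Huv Hw; rewrite !mem_res => Hx Hy; exact: (H4 u v _ _ Huv Hw Hx Hy).
Qed.

Lemma ext_inj m n (u0 : cell m) : injective (@ext m n u0).
Proof. exact: can_inj (@res_ext m n u0). Qed.

Lemma X1_eq m n (D : {set cell m}) u0 :
  [set S : {ffun cell m -> {set 'I_n.+1}} | okS D S &
     (ord_max \in S u0) && (S u0 != [set ord_max])]
  = ext u0 @: [set T | maximal D u0 && okS D T].
Proof.
apply/setP => S; rewrite inE; apply/idP/imsetP.
- move=> /andP [HS /andP [Hm Hne]]; have [Hmax Hone Hok] := res_ok HS Hm.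
  exists (res S); first by rewrite inE Hmax; rewrite (negbTE Hne) in Hok.
  by rewrite ext_res.
- move=> [T]; rewrite inE => /andP [Hmax HT] ->.
  rewrite (ext_ok HT Hmax) //= mem_ext_max eqxx /=.
  move/maximalP: (Hmax) => [Hu0 _]; move/okSP: HT => [H1 _ _ _].
  move: Hu0; rewrite -H1 => /set0Pn [x Hx].
  apply/negP => /eqP /setP /(_ (wd x)); by rewrite mem_ext_wd Hx inE wd_neq_max.
Qed.

Lemma X2_eq m n (D : {set cell m}) u0 :
  [set S : {ffun cell m -> {set 'I_n.+1}} | okS D S & S u0 == [set ord_max]]
  = ext u0 @: [set T | maximal D u0 && okS (D :\ u0) T].
Proof.
apply/setP => S; rewrite inE; apply/idP/imsetP.
- move=> /andP [HS He].
  have Hm : ord_max \in S u0 by rewrite (eqP He) inE.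
  have [Hmax Hone Hok] := res_ok HS Hm.
  exists (res S); first by rewrite inE Hmax; rewrite He in Hok.
  by rewrite ext_res.
- move=> [T]; rewrite inE => /andP [Hmax HT] ->.
  rewrite (ext_ok HT Hmax) => [/=|u Hne]; last by rewrite !inE Hne.
  move/okSP: HT => [H1 _ _ _].
  have HT0 : T u0 = set0 by apply/eqP; move: (H1 u0); rewrite !inE eqxx /= => /negbFE.
  apply/eqP/setP => y; case: (ordS_case y) => [->|[x ->]].
  + by rewrite mem_ext_max in_set1 !eqxx.
  + by rewrite mem_ext_wd HT0 !inE wd_neq_max.
Qed.

Lemma card_cond m n (D : {set cell m}) u0 (D' : {set cell m}) :
  #|[set T : {ffun cell m -> {set 'I_n}} | maximal D u0 && okS D' T]|
  = if maximal D u0 then G n D' else 0.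
Proof.
rewrite /G; case: (maximal D u0); first by apply: eq_card => T; rewrite !inE.
by apply/eqP; rewrite cards_eq0; apply/eqP/setP => T; rewrite !inE.
Qed.

Lemma G_rec m n (D : {set cell m}) :
  G n.+1 D = \sum_(u0 : cell m) (if maximal D u0 then G n D + G n (D :\ u0) else 0).
Proof.
have step1 : G n.+1 D = \sum_(u0 : cell m)
    #|[set S : {ffun cell m -> {set 'I_n.+1}} | okS D S & ord_max \in S u0]|.
  rewrite /G -sum1_card.
  transitivity (\sum_(S in [set S | okS D S]) \sum_(u0 : cell m) ((@ord_max n \in S u0) : nat)).
    apply: eq_bigr => S; rewrite inE => HS.
    move/okSP: (HS) => [_ _ H3 _]; case: (H3 ord_max) => u0 Hu0.
    have [_ Hone _] := res_ok HS Hu0.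
    rewrite (bigD1 u0) //= Hu0 big1 // => u Hu; by rewrite Hone (negbTE Hu).
  rewrite exchange_big /=; apply: eq_bigr => u0 _.
  rewrite -sum1_card big_mkcond /= [RHS]big_mkcond /=; apply: eq_bigr => S _.
  by rewrite !inE; case: (okS D S); case: (ord_max \in S u0).
rewrite step1; apply: eq_bigr => u0 _.
rewrite -(cardsID [set S : {ffun cell m -> {set 'I_n.+1}} | S u0 == [set ord_max]]).
have -> : [set S : {ffun cell m -> {set 'I_n.+1}} | okS D S & ord_max \in S u0]
            :&: [set S : {ffun cell m -> {set 'I_n.+1}} | S u0 == [set ord_max]]
          = [set S | okS D S & S u0 == [set ord_max]].
  apply/setP => S; rewrite !inE; case E: (S u0 == [set ord_max]); rewrite ?andbF //.
  by rewrite (eqP E) in_set1 !eqxx ?andbT.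
have -> : [set S : {ffun cell m -> {set 'I_n.+1}} | okS D S & ord_max \in S u0]
            :\: [set S : {ffun cell m -> {set 'I_n.+1}} | S u0 == [set ord_max]]
          = [set S | okS D S & (ord_max \in S u0) && (S u0 != [set ord_max])].
  by apply/setP => S; rewrite !inE andbC andbA.
rewrite X1_eq X2_eq !card_imset; try exact: ext_inj.
rewrite !card_cond; case: (maximal D u0) => //; exact: addnC.
Qed.

Lemma G0 m (D : {set cell m}) : G 0 D = (D == set0).
Proof.
rewrite /G.
have Hall : forall S : {ffun cell m -> {set 'I_0}}, S = [ffun=> set0].
  move=> S; apply/ffunP => u; apply/setP => x; by case: x.
case: (eqVneq D set0) => [->|HD] /=.
- suff -> : [set S | okS set0 S] = [set ([ffun=> set0] : {ffun cell m -> {set 'I_0}})].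
    by rewrite cards1.
  apply/setP => S; rewrite !inE (Hall S) eqxx; apply/okSP; split.
  + by move=> u; rewrite ffunE eqxx inE.
  + by move=> u v [].
  + by move=> [].
  + by move=> u v [].
- apply/eqP; rewrite cards_eq0; apply/eqP/setP => S; rewrite !inE.
  apply/negbTE/okSP => -[H1 _ _ _].
  move/set0Pn: HD => [u Hu]; move: (H1 u); rewrite Hu (Hall S) ffunE eqxx //.
Qed.

Definition Dsh (m a c : nat) : {set cell m} :=
  [set u : cell m | if (u.1 : nat) == 0 then (u.2 < a)%N else (u.2 < c)%N].

Definition tc (m a : nat) : cell m.+1 := (ord0, inord a.-1).
Definition bc (m c : nat) : cell m.+1 := (ord_max, inord c.-1).

Lemma cellP m (u v : cell m) : (u == v) = ((u.1 : nat) == v.1) && ((u.2 : nat) == v.2).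
Proof. by case: u v => [i j] [k l]; rewrite xpair_eqE. Qed.

Lemma i2 (i : 'I_2) : (i : nat) = 0 \/ (i : nat) = 1.
Proof. case: i => [[|[|k]] Hk] /=; [by left|by right|by []]. Qed.

Lemma maximal_sh m a c (u : cell m.+1) : (c <= a)%N -> (a <= m.+1)%N ->
  maximal (Dsh m.+1 a c) u = ((u == tc m a) && (c < a)%N) || ((u == bc m c) && (0 < c)%N).
Proof.
move=> Hca Ham.
have Ea : ((inord a.-1 : 'I_m.+1) : nat) = a.-1 by rewrite inordK //; lia.
have Ec : ((inord c.-1 : 'I_m.+1) : nat) = c.-1 by rewrite inordK //; lia.
apply/maximalP/idP.
- case: u => [i j] [Hu Hmax]; move: Hu; rewrite inE /=.
  rewrite !cellP /= Ea Ec.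
  case: (i2 i) => Ei; rewrite Ei /=.
  + move=> Hj.
    case: (ltnP j.+1 a) => Hja.
      have Hj1 : (j.+1 < m.+1)%N by lia.
      have := Hmax (i, Ordinal Hj1); rewrite inE /= Ei /= Hja cellP /= /weakNW /= Ei.
      by rewrite (gtn_eqF (ltnSn j)) leqnSn andbF /= => /(_ isT isT).
    case: (ltnP c a) => Hca'; first by apply/orP; left; lia.
    have Hc : (c = a) by lia.
    have := Hmax (ord_max, j); rewrite inE /= Hc Hj cellP /= /weakNW /= Ei leqnn.
    by move=> /(_ isT isT).
  + move=> Hj.
    case: (ltnP j.+1 c) => Hjc.
      have Hj1 : (j.+1 < m.+1)%N by lia.
      have := Hmax (i, Ordinal Hj1); rewrite inE /= Ei /= Hjc cellP /= /weakNW /= Ei.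
      by rewrite (gtn_eqF (ltnSn j)) leqnSn andbF /= => /(_ isT isT).
    lia.
- move=> /orP [/andP [/eqP -> Hca']|/andP [/eqP -> Hc]].
  + split; first by rewrite inE /= Ea; lia.
    case=> [k l]; rewrite inE /= /weakNW /= cellP /= Ea.
    case: (i2 k) => Ek; rewrite Ek /=; lia.
  + split; first by rewrite inE /= Ec; lia.
    case=> [k l]; rewrite inE /= /weakNW /= cellP /= Ec.
    case: (i2 k) => Ek; rewrite Ek /=; lia.
Qed.

Fixpoint F (n a c : nat) : nat :=
  match n with
  | 0 => ((a == 0) && (c == 0) : nat)
  | n'.+1 => if (c <= a)%N then
      (if (c < a)%N then F n' a c + F n' a.-1 c else 0) +
      (if (0 < c)%N then F n' a c + F n' a c.-1 else 0) else 0
  end.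

Lemma Dsh_tc m a c : (c < a)%N -> (a <= m.+1)%N -> Dsh m.+1 a c :\ tc m a = Dsh m.+1 a.-1 c.
Proof.
move=> Hca Ham; have Ea : ((inord a.-1 : 'I_m.+1) : nat) = a.-1 by rewrite inordK //; lia.
apply/setP => -[i j]; rewrite !inE cellP /= Ea.
case: (i2 i) => ->; rewrite /=; lia.
Qed.

Lemma Dsh_bc m a c : (0 < c)%N -> (c <= m.+1)%N -> Dsh m.+1 a c :\ bc m c = Dsh m.+1 a c.-1.
Proof.
move=> Hc Hcm; have Ec : ((inord c.-1 : 'I_m.+1) : nat) = c.-1 by rewrite inordK //; lia.
apply/setP => -[i j]; rewrite !inE cellP /= Ec.
case: (i2 i) => ->; rewrite /=; lia.
Qed.

Lemma G_F m n a c : (c <= a)%N -> (a <= m.+1)%N -> G n (Dsh m.+1 a c) = F n a c.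
Proof.
elim: n a c => [|n IH] a c Hca Ham.
- rewrite G0 /=.
  case: a Hca Ham => [|a] Hca Ham.
  + have -> : c = 0 by lia.
    have E0 : Dsh m.+1 0 0 = set0.
      apply/setP => -[i j]; rewrite !inE.
      by case: (_ == 0).
    by rewrite E0 !eqxx.
  + have E0 : Dsh m.+1 a.+1 c != set0.
      apply/set0Pn; exists (ord0, ord0).
      by rewrite inE.
    by rewrite (negbTE E0).
- rewrite G_rec /= Hca.
  have Htb : tc m a != bc m c by rewrite cellP /=.
  rewrite (bigD1 (tc m a)) //= (bigD1 (bc m c)) //=.
  rewrite big1 => [|u /andP [Hu1 Hu2]]; last first.
    by rewrite maximal_sh // (negbTE Hu1) (negbTE Hu2).
  rewrite !maximal_sh // eqxx (negbTE Htb) eq_sym (negbTE Htb) eqxx /= addn0.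
  case: (ltnP c a) => Hca' /=; case: (posnP c) => Hc /=.
  + subst c. rewrite Dsh_tc // !IH //; lia.
  + rewrite Dsh_tc // Dsh_bc //; try lia. rewrite !IH //; lia.
  + lia.
  + have -> : a = c by lia. rewrite Dsh_bc //; try lia. rewrite !IH //; lia.
Qed.

Lemma nSYT_F b n : nSYTplus b.+1 n = F n b.+1 b.+1.
Proof.
rewrite -(@G_F b) //.
have HD : Dsh b.+1 b.+1 b.+1 = setT.
  apply/setP => -[i j]; rewrite !inE; by case: (_ == 0); rewrite ltn_ord.
rewrite HD /nSYTplus /G; apply: eq_card => S; rewrite !inE /is_SYTplus /okS.
congr andb; apply: eq_forallb => u; by rewrite inE eqb_id.
Qed.

Lemma F_gt n a c : (a < c)%N -> F n a c = 0.
Proof. case: n => [|n] /= H; last by rewrite leqNgt H. by case: a H => //; case: c. Qed.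

Lemma F_big n a c : (n < a + c)%N -> F n a c = 0.
Proof.
elim: n a c => [|n IH] a c H /=; first by case: a H => //; case: c.
case: ifP => // _.
rewrite !IH; try lia; case: ifP; case: ifP => //= *; rewrite ?IH; lia.
Qed.

Lemma sum_shift K (g : nat -> nat) : g 0 = 0 -> g K = 0 ->
  \sum_(0 <= a < K) g a = \sum_(0 <= a < K) g a.+1.
Proof.
case: K => [|k] g0 gK; first by rewrite !big_geq.
by rewrite big_nat_recl // g0 add0n big_nat_recr //= gK addn0.
Qed.

Lemma J_gen K n (X : nat -> nat -> nat) : (n.+1 < K)%N ->
  \sum_(0 <= a < K) \sum_(0 <= c < K) F n.+1 a c * X a c =
  \sum_(0 <= a < K) \sum_(0 <= c < K) F n a c *
     (((c <= a)%N * ((c < a)%N + (0 < c)%N)) * X a c + (c <= a)%N * X a.+1 c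
      + (c < a)%N * X a c.+1).
Proof.
move=> HK.
have E : forall a c, F n.+1 a c * X a c =
   F n a c * (((c <= a)%N * ((c < a)%N + (0 < c)%N)) * X a c)
   + (c < a)%N * F n a.-1 c * X a c
   + ((c <= a) && (0 < c))%N * F n a c.-1 * X a c.
  move=> a c /=; case: (leqP c a) => Hca /=.
  - by case: (c < a)%N; case: (0 < c)%N; rewrite /=; ring.
  - have -> : (c < a)%N = false by lia.
    rewrite /=; ring.
under eq_bigr => a _ do under eq_bigr => c _ do rewrite E.
rewrite (eq_bigr (fun a => \sum_(0 <= c < K) F n a c * (((c <= a)%N * ((c < a)%N + (0 < c)%N)) * X a c)
   + \sum_(0 <= c < K) (c < a)%N * F n a.-1 c * X a c
   + \sum_(0 <= c < K) ((c <= a) && (0 < c))%N * F n a c.-1 * X a c)); last first.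
  by move=> a _; rewrite -!big_split.
rewrite !big_split /=.
rewrite [X in _ + X + _]exchange_big /=.
have S2 : \sum_(0 <= c < K) \sum_(0 <= a < K) (c < a)%N * F n a.-1 c * X a c
        = \sum_(0 <= c < K) \sum_(0 <= a < K) F n a c * ((c <= a)%N * X a.+1 c).
  apply: eq_bigr => c _; rewrite sum_shift; last 2 first.
  - by rewrite ltn0.
  - by rewrite F_big ?muln0 ?mul0n //; lia.
  by apply: eq_bigr => a _ /=; ring.
have S3 : forall a, \sum_(0 <= c < K) ((c <= a) && (0 < c))%N * F n a c.-1 * X a c
        = \sum_(0 <= c < K) F n a c * ((c < a)%N * X a c.+1).
  move=> a; rewrite sum_shift; last 2 first.
  - by rewrite andbF.
  - by rewrite F_big ?muln0 ?mul0n //; lia.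
  by apply: eq_bigr => c _ /=; rewrite andbT; ring.
rewrite S2 [X in _ + X + _]exchange_big /= (eq_bigr _ (fun a _ => S3 a)) -!big_split /=.
apply: eq_bigr => a _; rewrite -!big_split /=; apply: eq_bigr => c _; ring.
Qed.

Fixpoint R (L d : nat) (e : bool) : nat :=
  match L with
  | 0 => ((d == 0) && e : nat)
  | L'.+1 => R L' d.+1 e + (0 < d)%N * R L' d.-1 true + ((0 < d)%N + e) * R L' d e
  end.

Fixpoint Q (L d : nat) (e : bool) : nat :=
  match L with
  | 0 => 0
  | L'.+1 => Q L' d.+1 e + R L' d.+1 e + (0 < d)%N * Q L' d.-1 true
             + ((0 < d)%N + e) * Q L' d e
  end.

Definition JR K n L := \sum_(0 <= a < K) \sum_(0 <= c < K) F n a c * R L (a - c) (0 < c)%N.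
Definition JQ K n L := \sum_(0 <= a < K) \sum_(0 <= c < K)
   F n a c * (a * R L (a - c) (0 < c)%N + Q L (a - c) (0 < c)%N).

Lemma JR_step K n L : (n.+1 < K)%N -> JR K n.+1 L = JR K n L.+1.
Proof.
move=> HK; rewrite /JR J_gen //; apply: eq_bigr => a _; apply: eq_bigr => c _.
case: (leqP c a) => Hca; last by rewrite F_gt.
congr (_ * _); rewrite ?Hca /=.
have -> : a = c + (a - c) by lia.
move: (a - c) => d; rewrite addKn.
have -> : (c + d).+1 - c = d.+1 by lia.
have -> : c + d - c.+1 = d.-1 by lia.
have -> : (c < c + d)%N = (0 < d)%N by lia.
rewrite mul1n; ring.
Qed.

Lemma JQ_step K n L : (n.+1 < K)%N -> JQ K n.+1 L = JQ K n L.+1.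
Proof.
move=> HK; rewrite /JQ J_gen //; apply: eq_bigr => a _; apply: eq_bigr => c _.
case: (leqP c a) => Hca; last by rewrite F_gt.
congr (_ * _); rewrite ?Hca /=.
have -> : a = c + (a - c) by lia.
move: (a - c) => d; rewrite addKn.
have -> : (c + d).+1 - c = d.+1 by lia.
have -> : c + d - c.+1 = d.-1 by lia.
have -> : (c < c + d)%N = (0 < d)%N by lia.
rewrite mul1n; ring.
Qed.

Lemma JR_iter K i j : (i.+1 < K)%N -> JR K i j = JR K 0 (i + j).
Proof.
elim: i j => [|i IH] j H //.
rewrite JR_step; last lia.
rewrite IH; [by rewrite addSnnS | lia].
Qed.

Lemma JQ_iter K i j : (i.+1 < K)%N -> JQ K i j = JQ K 0 (i + j).
Proof.
elim: i j => [|i IH] j H //.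
rewrite JQ_step; last lia.
rewrite IH; [by rewrite addSnnS | lia].
Qed.

Lemma sum0_only K (g : nat -> nat -> nat) : (0 < K)%N ->
  \sum_(0 <= a < K) \sum_(0 <= c < K) F 0 a c * g a c = g 0 0.
Proof.
case: K => // k _.
rewrite big_nat_recl // big_nat_recl //= mul1n.
rewrite big1_seq => [|c _]; last by rewrite mul0n.
rewrite big1_seq => [|a _]; last by rewrite big1_seq // => c _.
by rewrite !addn0.
Qed.

Lemma JR0 K L : (0 < K)%N -> JR K 0 L = R L 0 false.
Proof. move=> H; exact: (sum0_only (fun a c => R L (a - c) (0 < c)%N) H). Qed.

Lemma JQ0 K L : (0 < K)%N -> JQ K 0 L = Q L 0 false.
Proof.
move=> H; rewrite /JQ (sum0_only (fun a c => a * R L (a - c) (0 < c)%N + Q L (a - c) (0 < c)%N) H).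
by rewrite mul0n.
Qed.

Lemma diag_sum K (g : nat -> nat -> nat) :
  (forall a c, a != c -> g a c = 0) ->
  \sum_(0 <= a < K) \sum_(0 <= c < K) g a c = \sum_(0 <= a < K) g a a.
Proof.
move=> Hg; apply: eq_big_nat => a Ha.
rewrite (bigD1_seq a) ?mem_index_iota ?iota_uniq //= big1_seq ?addn0 // => c /andP [Hc _].
by apply: Hg; rewrite eq_sym.
Qed.

Lemma JRn K n : JR K n 0 = \sum_(0 <= a < K) (0 < a)%N * F n a a.
Proof.
rewrite /JR diag_sum => [|a c Hac].
- by apply: eq_bigr => a _; rewrite subnn /= mulnC.
- case: (ltnP a c) => H; first by rewrite F_gt.
  rewrite /=; have -> : (a - c == 0) = false by lia. by rewrite muln0.
Qed.

Lemma JQn K n : JQ K n 0 = \sum_(0 <= a < K) a * F n a a.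
Proof.
rewrite /JQ diag_sum => [|a c Hac].
- apply: eq_bigr => a _; rewrite subnn /= addn0.
  by case: a => [|a] /=; rewrite ?muln0 ?mul0n // muln1 mulnC.
- case: (ltnP a c) => H; first by rewrite F_gt.
  rewrite /=; have -> : (a - c == 0) = false by lia. by rewrite muln0 addn0 muln0.
Qed.

Lemma F_diag0 n a : (n./2 < a)%N -> F n a a = 0.
Proof. move=> H; apply: F_big; have := odd_double_half n; rewrite -addnn; case: (odd n) => /=; lia. Qed.

Lemma num_eq n : (\sum_(1 <= b < n./2.+1) (b * nSYTplus b n))%N = Q n 0 false.
Proof.
rewrite -(@JQ0 n.+2 n) //; have := @JQ_iter n.+2 n 0 (ltnSn _); rewrite addn0 => <-; rewrite JQn.
rewrite (@big_cat_nat _ _ _ 1 0 n.+2) //= big_nat1 ?mul0n ?add0n.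
rewrite (@big_cat_nat _ _ _ n./2.+1 1 n.+2) //=; last first.
  by have := odd_double_half n; rewrite -addnn; case: odd => /=; lia.
rewrite [X in _ = _ + X]big1_seq ?addn0 => [|a]; last first.
  by rewrite /= mem_index_iota => /andP [H _]; rewrite F_diag0 ?muln0.
apply: eq_big_nat => -[|b] // _; by rewrite nSYT_F.
Qed.

Lemma den_eq n : (\sum_(1 <= b < n./2.+1) nSYTplus b n)%N = R n 0 false.
Proof.
rewrite -(@JR0 n.+2 n) //; have := @JR_iter n.+2 n 0 (ltnSn _); rewrite addn0 => <-; rewrite JRn.
rewrite (@big_cat_nat _ _ _ 1 0 n.+2) //= big_nat1 ?mul0n ?add0n.
rewrite (@big_cat_nat _ _ _ n./2.+1 1 n.+2) //=; last first.
  by have := odd_double_half n; rewrite -addnn; case: odd => /=; lia.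
rewrite [X in _ = _ + X]big1_seq ?addn0 => [|a]; last first.
  by rewrite /= mem_index_iota => /andP [H _]; rewrite F_diag0 ?muln0.
apply: eq_big_nat => -[|b] // _; by rewrite nSYT_F mul1n.
Qed.

Local Open Scope ring_scope.

Definition v (a k L : nat) : rat :=
  if (a <= L)%N then ('C((L - a).*2 + k, L - a))%:R else 0.

Lemma V1 a k L : v a k.+1 L = v a k L + v a.+1 k.+2 L.
Proof.
rewrite /v; case: (leqP a.+1 L) => H1.
- have -> : (a <= L)%N by lia.
  have -> : (L - a = (L - a.+1).+1)%N by lia.
  move: (L - a.+1)%N => j; rewrite doubleS addnS binS natrD; congr (_ + _); have -> : (j.*2 + k.+2 = j.*2.+2 + k)%N by lia. by [].
- case: (leqP a L) => H0; last by rewrite addr0.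
  have -> : (L - a = 0)%N by lia.
  by rewrite !bin0 addr0.
Qed.

Lemma V0 a L : v a 0 L = (L == a)%:R + 2 * v a.+1 1 L.
Proof.
rewrite /v; case: (leqP a.+1 L) => H1.
- have -> : (a <= L)%N by lia.
  have -> : (L - a = (L - a.+1).+1)%N by lia.
  have -> : (L == a) = false by lia.
  move: (L - a.+1)%N => j; rewrite addn0 doubleS binS natrD.
  have E : 'C(j.*2.+1, j.+1) = 'C(j.*2.+1, j).
    rewrite -(@bin_sub j.*2.+1 j); last by rewrite -addnn; lia.
    congr binomial; rewrite -addnn; lia.
  rewrite E addn1 /=; ring.
- case: (leqP a L) => H0; last first.
    by have -> : (L == a) = false by lia; rewrite mulr0 addr0.
  have -> : L = a by lia.
  by rewrite subnn eqxx bin0 mulr0 addr0.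
Qed.

Lemma VS a k L : v a.+1 k L.+1 = v a k L.
Proof. by rewrite /v ltnS subSS. Qed.
Ltac instV d L := have := V1 (0 + d) (0 + d*2) L; have := V1 (0 + d) (1 + d*2) L; have := V1 (0 + d) (2 + d*2) L; have := V1 (0 + d) (3 + d*2) L; have := V1 (0 + d) (4 + d*2) L; have := V1 (1 + d) (0 + d*2) L; have := V1 (1 + d) (1 + d*2) L; have := V1 (1 + d) (2 + d*2) L; have := V1 (1 + d) (3 + d*2) L; have := V1 (1 + d) (4 + d*2) L; have := V1 (1 + d) (5 + d*2) L; have := V1 (1 + d) (6 + d*2) L; have := V1 (2 + d) (0 + d*2) L; have := V1 (2 + d) (1 + d*2) L; have := V1 (2 + d) (2 + d*2) L; have := V1 (2 + d) (3 + d*2) L; have := V1 (2 + d) (4 + d*2) L; have := V1 (2 + d) (5 + d*2) L; have := V1 (2 + d) (6 + d*2) L; have := V1 (2 + d) (7 + d*2) L; have := V1 (2 + d) (8 + d*2) L; have := V1 (3 + d) (2 + d*2) L; have := V1 (3 + d) (3 + d*2) L; have := V1 (3 + d) (4 + d*2) L; have := V1 (3 + d) (5 + d*2) L; have := V1 (3 + d) (6 + d*2) L; have := V1 (3 + d) (7 + d*2) L; have := V1 (3 + d) (8 + d*2) L; have := V1 (3 + d) (9 + d*2) L; have := V1 (3 + d) (10 + d*2) L; have := V1 (4 + d) (4 + d*2) L; have := V1 (4 + d) (5 + d*2) L; have := V1 (4 + d) (6 + d*2) L; have := V1 (4 + d) (7 + d*2) L; have := V1 (4 + d) (8 + d*2)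 L; have := V1 (4 + d) (9 + d*2) L; have := V1 (4 + d) (10 + d*2) L; have := V1 (4 + d) (11 + d*2) L; have := V1 (4 + d) (12 + d*2) L; have := V1 (5 + d) (6 + d*2) L; have := V1 (5 + d) (7 + d*2) L; have := V1 (5 + d) (8 + d*2) L; have := V1 (5 + d) (9 + d*2) L; have := V1 (5 + d) (10 + d*2) L; have := V1 (5 + d) (11 + d*2) L; have := V1 (5 + d) (12 + d*2) L; have := V1 (5 + d) (13 + d*2) L; have := V1 (5 + d) (14 + d*2) L; have := V1 (6 + d) (8 + d*2) L; have := V1 (6 + d) (9 + d*2) L; have := V1 (6 + d) (10 + d*2) L; have := V1 (6 + d) (11 + d*2) L; have := V1 (6 + d) (12 + d*2) L; have := V1 (6 + d) (13 + d*2) L; have := V1 (6 + d) (14 + d*2) L; have := V1 (6 + d) (15 + d*2) L; have := V1 (6 + d) (16 + d*2) L; have := V1 (7 + d) (10 + d*2) L; have := V1 (7 + d) (11 + d*2) L; have := V1 (7 + d) (12 + d*2) L; have := V1 (7 + d) (13 + d*2) L; have := V1 (7 + d) (14 + d*2) L; have := V1 (7 + d) (15 + d*2) L; have := V1 (7 + d) (16 + d*2) L; have := V1 (7 + d) (17 + d*2) L; have := V1 (7 + d) (18 + d*2) L; have := V1 (8 + d) (12 + d*2) L; have := V1 (8 + d) (13 + d*2) L; have := V1 (8 + d) (14 + d*2) L; have := V1 (8 + d) (15 + d*2) L; have := V1 (8 + d) (16 + d*2) L; have := V1 (8 + d) (17 + d*2) L; have := V1 (8 + d) (18 + d*2) L;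 have := V1 (8 + d) (19 + d*2) L; have := V1 (8 + d) (20 + d*2) L; have := VS (0 + d) (0 + d*2) L; have := VS (0 + d) (1 + d*2) L; have := VS (0 + d) (2 + d*2) L; have := VS (0 + d) (3 + d*2) L; have := VS (0 + d) (4 + d*2) L; have := VS (1 + d) (0 + d*2) L; have := VS (1 + d) (1 + d*2) L; have := VS (1 + d) (2 + d*2) L; have := VS (1 + d) (3 + d*2) L; have := VS (1 + d) (4 + d*2) L; have := VS (1 + d) (5 + d*2) L; have := VS (1 + d) (6 + d*2) L; have := VS (2 + d) (0 + d*2) L; have := VS (2 + d) (1 + d*2) L; have := VS (2 + d) (2 + d*2) L; have := VS (2 + d) (3 + d*2) L; have := VS (2 + d) (4 + d*2) L; have := VS (2 + d) (5 + d*2) L; have := VS (2 + d) (6 + d*2) L; have := VS (2 + d) (7 + d*2) L; have := VS (2 + d) (8 + d*2) L; have := VS (3 + d) (2 + d*2) L; have := VS (3 + d) (3 + d*2) L; have := VS (3 + d) (4 + d*2) L; have := VS (3 + d) (5 + d*2) L; have := VS (3 + d) (6 + d*2) L; have := VS (3 + d) (7 + d*2) L; have := VS (3 + d) (8 + d*2) L; have := VS (3 + d) (9 + d*2) L; have := VS (3 + d) (10 + d*2) L; have := VS (4 + d) (4 + d*2) L; have := VS (4 + d) (5 + d*2) L; have := VS (4 + d) (6 + d*2) L; have := VS (4 + d) (7 + d*2) L; have := VS (4 + d) (8 + d*2) L; have := VS (4 + d) (9 + d*2) L; have := VS (4 + d) (10 + d*2) L; have := VS (4 + d) (11 + d*2)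 L; have := VS (4 + d) (12 + d*2) L; have := VS (5 + d) (6 + d*2) L; have := VS (5 + d) (7 + d*2) L; have := VS (5 + d) (8 + d*2) L; have := VS (5 + d) (9 + d*2) L; have := VS (5 + d) (10 + d*2) L; have := VS (5 + d) (11 + d*2) L; have := VS (5 + d) (12 + d*2) L; have := VS (5 + d) (13 + d*2) L; have := VS (5 + d) (14 + d*2) L; have := VS (6 + d) (8 + d*2) L; have := VS (6 + d) (9 + d*2) L; have := VS (6 + d) (10 + d*2) L; have := VS (6 + d) (11 + d*2) L; have := VS (6 + d) (12 + d*2) L; have := VS (6 + d) (13 + d*2) L; have := VS (6 + d) (14 + d*2) L; have := VS (6 + d) (15 + d*2) L; have := VS (6 + d) (16 + d*2) L; have := VS (7 + d) (10 + d*2) L; have := VS (7 + d) (11 + d*2) L; have := VS (7 + d) (12 + d*2) L; have := VS (7 + d) (13 + d*2) L; have := VS (7 + d) (14 + d*2) L; have := VS (7 + d) (15 + d*2) L; have := VS (7 + d) (16 + d*2) L; have := VS (7 + d) (17 + d*2) L; have := VS (7 + d) (18 + d*2) L; have := VS (8 + d) (12 + d*2) L; have := VS (8 + d) (13 + d*2) L; have := VS (8 + d) (14 + d*2) L; have := VS (8 + d) (15 + d*2) L; have := VS (8 + d) (16 + d*2) L; have := VS (8 + d) (17 + d*2) L; have := VS (8 + d) (18 + d*2) L; have := VS (8 + d) (19 + d*2) L; have := VS (8 + d) (20 + d*2) L; have := V0 (0 + d) L; have := V0 (1 + d) L; have := V0 (2 + d) L; have := V0 (3 + d) L; have := V0 (4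 + d) L; have := V0 (5 + d) L; have := V0 (6 + d) L; have := V0 (7 + d) L; have := V0 (8 + d) L.

Ltac instS L := have : ((L.+1 == 0%N)%:R : rat) = 0 by []; have := V1 0 0 L.+1; have := V1 0 1 L.+1; have := V1 0 2 L.+1; have := V1 0 3 L.+1; have := V1 0 4 L.+1; have := V1 1 0 L.+1; have := V1 1 1 L.+1; have := V1 1 2 L.+1; have := V1 1 3 L.+1; have := V1 1 4 L.+1; have := V1 1 5 L.+1; have := V1 1 6 L.+1; have := V1 2 0 L.+1; have := V1 2 1 L.+1; have := V1 2 2 L.+1; have := V1 2 3 L.+1; have := V1 2 4 L.+1; have := V1 2 5 L.+1; have := V1 2 6 L.+1; have := V1 2 7 L.+1; have := V1 2 8 L.+1; have := V1 3 2 L.+1; have := V1 3 3 L.+1; have := V1 3 4 L.+1; have := V1 3 5 L.+1; have := V1 3 6 L.+1; have := V1 3 7 L.+1; have := V1 3 8 L.+1; have := V1 3 9 L.+1; have := V1 3 10 L.+1; have := V0 0 L.+1; have := V0 1 L.+1; have := V0 2 L.+1; have := V0 3 L.+1.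

Lemma V1m (x : rat) a k L : x * v a k.+1 L = x * v a k L + x * v a.+1 k.+2 L.
Proof. by rewrite V1 mulrDr. Qed.

Lemma VSm (x : rat) a k L : x * v a.+1 k L.+1 = x * v a k L.
Proof. by rewrite VS. Qed.

Ltac instVm x d L := have := V1m x (0 + d) (0 + d*2) L; have := V1m x (0 + d) (1 + d*2) L; have := V1m x (0 + d) (2 + d*2) L; have := V1m x (0 + d) (3 + d*2) L; have := V1m x (1 + d) (0 + d*2) L; have := V1m x (1 + d) (1 + d*2) L; have := V1m x (1 + d) (2 + d*2) L; have := V1m x (1 + d) (3 + d*2) L; have := V1m x (1 + d) (4 + d*2) L; have := V1m x (1 + d) (5 + d*2) L; have := V1m x (2 + d) (1 + d*2) L; have := V1m x (2 + d) (2 + d*2) L; have := V1m x (2 + d) (3 + d*2) L; have := V1m x (2 + d) (4 + d*2) L; have := V1m x (2 + d) (5 + d*2) L; have := V1m x (2 + d) (6 + d*2) L; have := V1m x (2 + d) (7 + d*2) L; have := V1m x (3 + d) (3 + d*2) L; have := V1m x (3 + d) (4 + d*2) L; have := V1m x (3 + d) (5 + d*2) L; have := V1m x (3 + d) (6 + d*2) L; have := V1m x (3 + d) (7 + d*2) L; have := V1m x (3 + d) (8 + d*2) L; have := V1m x (3 + d) (9 + d*2) L; have := V1m x (4 + d) (5 + d*2) L; have := V1m x (4 + d) (6 + d*2) L; have := V1m x (4 + d) (7 + d*2) L; have := V1m x (4 + d) (8 + d*2) L; have := V1m x (4 + d) (9 + d*2) L; have := V1m x (4 + d) (10 + d*2)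 L; have := V1m x (4 + d) (11 + d*2) L; have := V1m x (5 + d) (7 + d*2) L; have := V1m x (5 + d) (8 + d*2) L; have := V1m x (5 + d) (9 + d*2) L; have := V1m x (5 + d) (10 + d*2) L; have := V1m x (5 + d) (11 + d*2) L; have := V1m x (5 + d) (12 + d*2) L; have := V1m x (5 + d) (13 + d*2) L; have := V1m x (6 + d) (9 + d*2) L; have := V1m x (6 + d) (10 + d*2) L; have := V1m x (6 + d) (11 + d*2) L; have := V1m x (6 + d) (12 + d*2) L; have := V1m x (6 + d) (13 + d*2) L; have := V1m x (6 + d) (14 + d*2) L; have := V1m x (6 + d) (15 + d*2) L; have := VSm x (0 + d) (0 + d*2) L; have := VSm x (0 + d) (1 + d*2) L; have := VSm x (0 + d) (2 + d*2) L; have := VSm x (0 + d) (3 + d*2) L; have := VSm x (1 + d) (0 + d*2) L; have := VSm x (1 + d) (1 + d*2) L; have := VSm x (1 + d) (2 + d*2) L; have := VSm x (1 + d) (3 + d*2) L; have := VSm x (1 + d) (4 + d*2) L; have := VSm x (1 + d) (5 + d*2) L; have := VSm x (2 + d) (1 + d*2) L; have := VSm x (2 + d) (2 + d*2) L; have := VSm x (2 + d) (3 + d*2) L; have := VSm x (2 + d) (4 + d*2) L; have := VSm x (2 + d) (5 + d*2) L; have := VSm x (2 + d) (6 + d*2) L; have := VSm x (2 + d) (7 + d*2) L; have := VSm x (3 + d) (3 + d*2) L; have := VSm x (3 + d) (4 + d*2) L; have := VSm x (3 + d) (5 + d*2) L; have := VSm x (3 + d) (6 + d*2) L; have := VSm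 x (3 + d) (7 + d*2) L; have := VSm x (3 + d) (8 + d*2) L; have := VSm x (3 + d) (9 + d*2) L; have := VSm x (4 + d) (5 + d*2) L; have := VSm x (4 + d) (6 + d*2) L; have := VSm x (4 + d) (7 + d*2) L; have := VSm x (4 + d) (8 + d*2) L; have := VSm x (4 + d) (9 + d*2) L; have := VSm x (4 + d) (10 + d*2) L; have := VSm x (4 + d) (11 + d*2) L; have := VSm x (5 + d) (7 + d*2) L; have := VSm x (5 + d) (8 + d*2) L; have := VSm x (5 + d) (9 + d*2) L; have := VSm x (5 + d) (10 + d*2) L; have := VSm x (5 + d) (11 + d*2) L; have := VSm x (5 + d) (12 + d*2) L; have := VSm x (5 + d) (13 + d*2) L; have := VSm x (6 + d) (9 + d*2) L; have := VSm x (6 + d) (10 + d*2) L; have := VSm x (6 + d) (11 + d*2) L; have := VSm x (6 + d) (12 + d*2) L; have := VSm x (6 + d) (13 + d*2) L; have := VSm x (6 + d) (14 + d*2) L; have := VSm x (6 + d) (15 + d*2) L.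

Lemma v0L a k : v a k 0 = (a == 0%N)%:R.
Proof. rewrite /v; case: a => [|a] //=. by rewrite bin0. Qed.

Lemma R1c L d : (R L d true)%:R = v d (1 + d*2) L - 2 * v (1 + d) (2 + d*2) L.
Proof.
elim: L d => [|L IH] d.
- rewrite !v0L /=; case: d => [|d] /=; by rewrite ?subr0.
- case: d => [|d]; rewrite /= !(natrD, natrM) !IH /=.
  + instS L; instV 0%N L; lra.
  + instV d L; lra.
Qed.

Lemma R0c L d : (R L d.+1 false)%:R = v (1 + d) (2 + d*2) L - 2 * v (2 + d) (3 + d*2) L.
Proof.
elim: L d => [|L IH] d; first by rewrite !v0L /= subr0.
rewrite /= !(natrD, natrM) !IH R1c /=.
instV d L; lra.
Qed.

Lemma Q1c L d : (Q L d true)%:R = d%:R * v (2 + d) (3 + d*2) L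
   + (v (2 + d) (4 + d*2) L - 2 * v (3 + d) (5 + d*2) L) + v (4 + d) (6 + d*2) L.
Proof.
elim: L d => [|L IH] d; first by rewrite !v0L /=; lra.
case: d => [|d]; rewrite /= !(natrD, natrM) !IH !R1c /=.
- instS L; instV 0%N L; lra.
- rewrite -!nat1r; instV d L; instVm (d%:R : rat) d L; lra.
Qed.

Lemma Q0c L d : (Q L d.+1 false)%:R = d%:R * v (3 + d) (4 + d*2) L
   + 2 * (v (3 + d) (5 + d*2) L - 2 * v (4 + d) (6 + d*2) L) + 2 * v (5 + d) (7 + d*2) L.
Proof.
elim: L d => [|L IH] d; first by rewrite !v0L /=; lra.
rewrite /= !(natrD, natrM) !IH !R0c !Q1c /=.
rewrite -!nat1r; instV d L; instVm (d%:R : rat) d L; lra.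
Qed.

Lemma vE a k L j : (a + j = L)%N -> v a k L = ('C(k + j.*2, j))%:R.
Proof. move=> <-; rewrite /v leq_addr addKn; congr (_%:R); congr binomial; lia. Qed.

Lemma castn (m : nat) : (m.*2)%:R = 2 * (m%:R : rat).
Proof. by rewrite -muln2 natrM mulrC. Qed.

Lemma final_gen p :
  ((Q p.+4.+2 0 false)%:R / (R p.+4.+2 0 false)%:R : rat)
  = ((p.+4.+2)%:R ^+ 2 + (p.+4.+2)%:R - 6) / (4 * (p.+4.+2)%:R - 6).
Proof.
have eR : (R p.+4.+2 0 false)%:R = (R p.+4.+1 1 false)%:R :> rat by rewrite /= !mul0n !addn0.
have eQ : (Q p.+4.+2 0 false)%:R = (Q p.+4.+1 1 false)%:R + (R p.+4.+1 1 false)%:R :> rat.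
  by rewrite /= !mul0n !addn0 natrD.
rewrite eQ eR R0c Q0c /= mul0r add0r.
rewrite (@vE (1+0) _ _ p.+4) // (@vE (2+0) _ _ p.+3) // (@vE (3+0) _ _ p.+2) //.
rewrite (@vE (4+0) _ _ p.+1) // (@vE (5+0) _ _ p) //.
set x0 := ('C(7 + p.*2, p))%:R : rat.
set x1 := ('C(6 + p.+1.*2, p.+1))%:R : rat.
set x2 := ('C(5 + p.+2.*2, p.+2))%:R : rat.
set x3 := ('C(3 + p.+3.*2, p.+3))%:R : rat.
set x4 := ('C(2 + p.+4.*2, p.+4))%:R : rat.
set P := (p%:R : rat).
have r1 : (8 + 2 * P) * x0 = (P + 1) * x1.
  have := congr1 (fun t => t%:R : rat) (mul_bin_diag (8 + p.*2) p).
  rewrite !natrM natrD castn -!nat1r => h; lra.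
have r2 : (9 + 2 * P) * x1 = (P + 2) * x2.
  have := congr1 (fun t => t%:R : rat) (mul_bin_diag (9 + p.*2) p.+1).
  rewrite !natrM natrD castn -!nat1r => h; lra.
have r3 : (P + 3) * x3 = (P + 7) * x2.
  have := congr1 (fun t => t%:R : rat) (mul_bin_left (9 + p.*2) p.+2).
  have -> : (9 + p.*2 - p.+2 = p + 7)%N by lia.
  rewrite !natrM natrD -!nat1r => h; lra.
have r4 : (10 + 2 * P) * x3 = (P + 4) * x4.
  have := congr1 (fun t => t%:R : rat) (mul_bin_diag (10 + p.*2) p.+3).
  rewrite !natrM natrD castn -!nat1r => h; lra.
have hP : 0 <= P by rewrite ler0n.
have hx0 : 0 < x0 by rewrite ltr0n bin_gt0; lia.
have nz : forall c : rat, 0 < c -> c != 0 by move=> c; exact: lt0r_neq0.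
have e1 : x1 = (8 + 2 * P) * x0 / (P + 1).
  by rewrite r1 [(P + 1) * _]mulrC mulfK //; apply: nz; lra.
have e2 : x2 = (9 + 2 * P) * x1 / (P + 2).
  by rewrite r2 [(P + 2) * _]mulrC mulfK //; apply: nz; lra.
have e3 : x3 = (P + 7) * x2 / (P + 3).
  by rewrite -r3 [(P + 3) * _]mulrC mulfK //; apply: nz; lra.
have e4 : x4 = (10 + 2 * P) * x3 / (P + 4).
  by rewrite r4 [(P + 4) * _]mulrC mulfK //; apply: nz; lra.
rewrite e4 e3 e2 e1 -!nat1r.
field.
have hY : 0 < (p%:R + 7) * ((9 + 2 * p%:R) * ((8 + 2 * p%:R) * 'C(7 + p.*2, p)%:R)) :> rat.
  by rewrite !mulr_gt0 //; lra.
move: hY; set Y := (_ * (_ * (_ * _))) => hY.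
repeat (apply/andP; split); try (apply: nz; lra).
Qed.

Unset Implicit Arguments.

Theorem theorem20 (n : nat) (hn : (3 <= n)%N) :
  ((\sum_(1 <= b < n./2.+1) (b * nSYTplus b n)%N)%:R
     / (\sum_(1 <= b < n./2.+1) nSYTplus b n)%:R : rat)
  = ((n%:R ^+ 2 + n%:R - 6) / (4 * n%:R - 6)).
Proof.
transitivity ((Q n 0 false)%:R / (R n 0 false)%:R : rat).
  congr (_%:R / _%:R); [exact: num_eq | exact: den_eq].
case: n hn => [|[|[|[|[|[|p]]]]]] hn //.
exact: final_gen.
Qed.
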